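(* Let $f(x)=\prod_{a\in\mathcal{F}} f_a(x_a)$ be a factorized model and consider the chance-constrained Bethe free energy Lagrangian \[ \begin{aligned} L[q] &= F[q] + \sum_{i\in \mathcal{V}} \gamma_i \Big[ \int q_i\, dx_i - 1 \Big] + \sum_{a\in \mathcal{F}} \gamma_a \Big[ \int q_a\, dx_a - 1 \Big] \\ &\quad + \sum_{a\in \mathcal{F}} \sum_{i\in \mathcal{V}(a)} \int \zeta_{ia}(x_i)\Big[q_i(x_i) - \int q_a(x_a)\, dx_{a\setminus i}\Big] dx_i + \sum_{i\in \mathcal{V}} \eta_i\Big[\int q_i(x_i)\, g_i(x_i)\, dx_i - (1 - \epsilon)\Big], \end{aligned} \] with $F[q]=-\sum_{a}\int q_a\log f_a\,dx_a+\sum_{a}\int q_a\log q_a\,dx_a-\sum_{i}(d_i-1)\int q_i\log q_i\,dx_i$. For $j\in\mathcal{V}$ let \[ q_j^*(x_j;\eta_j)=\frac{1}{Z_j(\eta_j)}\exp\!\big(-\eta_j g_j(x_j)\big)\prod_{a\in\mathcal{F}(j)}\mu_{aj}(x_j) \] denote the form of the stationary points of $L$ as a functional of $q_j$, where $\mu_{aj}(x_j)=\int f_a(x_a)\prod_{i\in\mathcal{V}(a),i\neq j}\mu_{ia}(x_i)\,dx_{a\setminus j}$, $\mu_{ia}=\exp\zeta_{ia}$, and $Z_j(\eta_j)$ is the normalizer. Define \[ q_j^{(0)}(x_j)=q_j^*(x_j;\eta_j=0),\qquad \Phi_j^{(0)}=\int_{\mathcal{S}_j}q_j^{(0)}(x_j)\,dx_j,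 \] \[ \eta_j^*=\log(\epsilon\,\Phi_j^{(0)})-\log(1-\epsilon)-\log(1-\Phi_j^{(0)}). \] Then, when the chance constraint on $x_j$ is active (i.e. $\int q_j g_j\,dx_j=1-\epsilon$ holds with equality), the stationary points of $L$ as a functional of $q_j$ are of the form \[ q_j^*(x_j;\eta_j=\eta_j^* )=\begin{cases}\dfrac{1-\epsilon}{\Phi_j^{(0)}}\,q_j^{(0)}(x_j) & \text{if } x_j\in\mathcal{S}_j,\\[2mm] \dfrac{\epsilon}{1-\Phi_j^{(0)}}\,q_j^{(0)}(x_j) & \text{otherwise.}\end{cases} \]
   Context: Bipartite factor graph $(\mathcal{F},\mathcal{V},\mathcal{E})$: factor nodes $a\in\mathcal{F}$ with non-negative factor functions $f_a$, variable nodes $i\in\mathcal{V}$, edge $(i,a)$ iff $x_i$ is an argument of $f_a$; $x_a$ collects variables $x_i$, $i\in\mathcal{V}(a)$; $\mathcal{V}(a)$, $\mathcal{F}(i)$ denote neighborhoods, $d_i=|\mathcal{F}(i)|$, and $x_{a\setminus i}$ denotes all variables of $x_a$ except $x_i$. The functional's arguments are beliefs $q_a(x_a)$ and $q_i(x_i)$. A chance constraint on $x_j$ requires $1-\epsilon\le\int_{\mathcal{S}_j}q_j(x_j)\,dx_j=\int q_j g_j\,dx_j$, where $\mathcal{S}_j$ is a ''safe'' region, $g_j$ its indicator function, and $\epsilon\in[0,1]$. $\gamma,\zeta,\eta$ are Lagrange multipliers; stationary points are in the sense of the calculus of variations with marginalization constraints imposed. *)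

(* Defs.v *)
From HB Require Import structures.
From mathcomp Require Import all_boot all_order all_algebra.
From mathcomp Require Import all_classical all_reals all_analysis.
Set Implicit Arguments. Unset Strict Implicit. Unset Printing Implicit Defensive.
Import Order.TTheory GRing.Theory Num.Theory.
Local Open Scope classical_set_scope.
Local Open Scope ring_scope.

Section ChanceBethe.
Context {R : realType} {d : measure_display} {T : measurableType d}.

Definition msg_prod (F : finType) (msg : F -> T -> R) (x : T) : R :=
  \prod_(a : F) msg a x.

(* normalizer Z_j(eta) = int exp(-eta g_j) prod mu_aj dx_j, with g_j = \1_S *)
Definition Zj (mu : {measure set T -> \bar R}) (S : set T) (m : T -> R)
  (eta : R) : R :=
  Rintegral mu setT (fun y => expR (- eta * \1_S y) * m y).

Definition qstar (mu : {measure set T -> \bar R}) (S : set T) (m : T -> R)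
  (eta : R) (x : T) : R :=
  expR (- eta * \1_S x) * m x / Zj mu S m eta.

Definition q0 mu S m : T -> R := qstar mu S m 0.
Definition Phi0 mu S m : R := Rintegral mu S (q0 mu S m).

Definition eta_star (eps Phi : R) : R :=
  ln (eps * Phi) - ln (1 - eps) - ln (1 - Phi).

End ChanceBethe.

(* Main.v *)
Require Import Defs.
From HB Require Import structures.
From mathcomp Require Import all_boot all_order all_algebra.
From mathcomp Require Import all_classical all_reals all_analysis.
From mathcomp Require Import ring lra.
Import Order.TTheory GRing.Theory Num.Theory.
Local Open Scope classical_set_scope.
Local Open Scope ring_scope.

Theorem theorem1 (R : realType) (d : measure_display) (T : measurableType d)
  (mu : {measure set T -> \bar R}) (F : finType) (msg : F -> T -> R)
  (S : set T) (eps : R) :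
  measurable S ->
  (forall a x, 0 <= msg a x) ->
  (forall a, measurable_fun setT (msg a)) ->
  mu.-integrable setT (fun x => (msg_prod msg x)%:E) ->
  0 < Rintegral mu setT (msg_prod msg) ->
  0 < eps < 1 ->
  forall eta : R,
    Rintegral mu setT
      (fun x => qstar mu S (msg_prod msg) eta x * \1_S x) = 1 - eps ->
    eta = eta_star eps (Phi0 mu S (msg_prod msg)) /\
    forall x : T,
      qstar mu S (msg_prod msg) eta x =
        if x \in S then
          (1 - eps) / Phi0 mu S (msg_prod msg) * q0 mu S (msg_prod msg) x
        else
          eps / (1 - Phi0 mu S (msg_prod msg)) * q0 mu S (msg_prod msg) x.
Proof.
move=> mS m0 mm Im Mpos /andP[e0 e1] eta Hc.
set m := msg_prod msg in Im Mpos Hc *.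
set M := Rintegral mu setT m in Mpos.
have ImT : mu.-integrable setT (EFin \o m) by [].
have ImS : mu.-integrable S (EFin \o m) by apply: integrableS ImT.
have I1S : mu.-integrable setT (EFin \o (fun y => \1_S y * m y)).
  apply: (@eq_integrable _ _ _ mu setT measurableT ((EFin \o m) \_ S)) => //.
    move=> y _; rewrite /patch /= indicE; case: ifP => _.
      by rewrite mul1r.
    by rewrite mul0r.
  by apply/(integrable_mkcond _ mS).
set A := Rintegral mu setT (fun y => \1_S y * m y).
have AS : Rintegral mu S m = A.
  rewrite Rintegral_mkcond /A; apply: eq_Rintegral => y _.
  by rewrite /patch indicE; case: ifP => _; rewrite ?mul1r ?mul0r.
have A0 : 0 <= A.
  apply: Rintegral_ge0 => y _; apply: mulr_ge0; first by rewrite indicE.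
  by apply: prodr_ge0.
have ZE : forall e, Zj mu S m e = M + (expR (- e) - 1) * A.
  move=> e; rewrite /Zj /M /A -RintegralZl //.
  rewrite -RintegralD //; last first.
    have := @integrableZl _ _ _ mu setT measurableT (expR (- e) - 1) _ I1S.
    by apply: eq_integrable => // y _ /=; rewrite EFinM.
  apply: eq_Rintegral => y _; rewrite indicE; case: (y \in S).
    by rewrite mulr1 mul1r -[\prod_a msg a y]/(m y); ring.
  by rewrite mulr0 expR0 mul0r -[\prod_a msg a y]/(m y); ring.
have q0E : forall y, q0 mu S m y = m y / M.
  by move=> y; rewrite /q0 /qstar ZE !oppr0 !mul0r !expR0 subrr !mul0r addr0 mul1r.
have PhiE : Phi0 mu S m = A / M.
  rewrite /Phi0 (@eq_Rintegral _ _ _ mu S (fun y => m y * M^-1)); last first.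
    by move=> y _; rewrite -[LHS]/(q0 mu S m y) q0E.
  by rewrite RintegralZr // AS.
set E := expR (- eta).
set Z := Zj mu S m eta.
have Hc' : E / Z * A = 1 - eps.
  rewrite -Hc /A -RintegralZl //; apply: eq_Rintegral => y _.
  rewrite /qstar -/Z indicE; case: (y \in S).
    by rewrite /= ?mulr1n !mulr1 mul1r /E mulrAC.
  by rewrite /= ?mulr0n !mulr0 ?mul0r ?mulr0.
have ZE' : Z = M + (E - 1) * A by rewrite /Z ZE.
have Epos : 0 < E by apply: expR_gt0.
have Z0 : Z != 0.
  apply/negP => /eqP Z0; move: Hc'; rewrite Z0 invr0 mulr0 mul0r => H; lra.
have An0 : A != 0.
  apply/negP => /eqP Ae; move: Hc'; rewrite Ae mulr0 => H; lra.
have Apos : 0 < A by rewrite lt0r An0 A0.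
have EA : E * A = (1 - eps) * Z.
  by rewrite -Hc'; field.
have key : eps * E * A = (1 - eps) * (M - A).
  have H : E * A = (1 - eps) * (M + E * A - A) by rewrite {1}EA ZE'; ring.
  rewrite -mulrA; transitivity (E * A - (1 - eps) * (E * A)); first by ring.
  by rewrite {1}H; ring.
have Bpos : 0 < M - A.
  have : 0 < eps * E * A by rewrite !mulr_gt0.
  have h1 : 0 < 1 - eps by lra.
  by rewrite key pmulr_rgt0.
have Mn0 : M != 0 by rewrite gt_eqF.
have Bn0 : M - A != 0 by rewrite gt_eqF.
have epsZ : eps * Z = M - A.
  rewrite ZE'; have : eps * E * A = (1 - eps) * (M - A) := key. 
  move=> H; lra.
split.
  have AM : A < M by rewrite -subr_gt0.
  rewrite /eta_star PhiE.
  have -> : 1 - A / M = (M - A) / M by field.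
  have hp : forall x : R, 0 < x -> x \in Num.pos by move=> x hx; rewrite posrE.
  rewrite !lnM ?ln_div ?hp ?divr_gt0 ?invr_gt0 ?subr_gt0 //.
  have : ln (eps * E * A) = ln ((1 - eps) * (M - A)) by rewrite key.
  rewrite !lnM ?hp ?mulr_gt0 ?subr_gt0 // /E expRK => H; lra.
move=> x; rewrite q0E PhiE /qstar -/Z.
have -> : 1 - A / M = (M - A) / M by field.
rewrite indicE; case: (x \in S); rewrite /= ?mulr1n ?mulr0n.
  rewrite mulr1 -/E.
  have -> : E = (1 - eps) * Z / A by rewrite -EA; field.
  field; rewrite Z0 An0 Mn0 //.
rewrite mulr0 expR0 mul1r.
have -> : Z = (M - A) / eps by rewrite -epsZ; field; rewrite gt_eqF.
field; rewrite Bn0 Mn0 gt_eqF //.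
Qed.
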